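(* Let $P$ be a poset and let $C_2$ denote the 2-chain. If two elements of $P$ are $(C_2, 2, k)$-symmetric, then $k \in \{0, 1\}$.
   Context: The 2-chain $C_2$ is the poset $\{x<y\}$. For a poset $X$, $\ell(X)$ is the cardinality of a longest chain in $X$. A subset $A$ of a poset $X$ is maximally ordered in $X$ if $|\{(a,b)\in A\times A : a<b\}|$ is maximal among all subsets of $X$ of cardinality $|A|$. For $\sigma\in\mathrm{Aut}(P)$ let $\Sigma(\sigma)=\{a\in P:\sigma(a)\ne a\}$. For a finite poset $Q$ and integer $r\ge2$: $\sigma\in\mathrm{Aut}(P)$ is a $(Q,r)$-generator if there exist subsets $S_0,\dots,S_{r-1}\subset\Sigma(\sigma)$, each isomorphic to $Q$, which are smallest maximally ordered subsets of $\Sigma(\sigma)$ with $\sigma(S_i)=S_{(i+1)\bmod r}$, $\ell(S_i)=\ell(\Sigma(\sigma))$ for all $i$, and $\bigcup_i S_i=\Sigma(\sigma)$; any two distinct $S_i,S_j$ are $(Q,r)$-symmetric subsets. Elements $a,b\in P$ are $(Q,r,0)$-symmetric if $a=b$; $(Q,r,1)$-symmetric if there are $(Q,r)$-symmetric subsets $A,B$ with $(Q,r)$-generator $\sigma$ such that $a\in A$ and $b=\sigma^q(a)\in B$ for some $1\le q<r$; for $n\ge2$, $(Q,r,n)$-symmetric if they are not $(Q,r,j)$-symmetric for any $j<n$ but there exist $c\in P$ and $j<n$ with $a$ $(Q,r,j)$-symmetric to $c$ and $c$ $(Q,r,n-j)$-symmetric to $b$. *)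

(* Defs.v *)
From HB Require Import structures.
From mathcomp Require Import all_boot all_order.
From mathcomp Require Import finmap.

Set Implicit Arguments.
Unset Strict Implicit.
Unset Printing Implicit Defensive.

Import Order.TTheory.
Local Open Scope order_scope.
Local Open Scope fset_scope.

Section PosetSymmetry.

Context {d : Order.disp_t} {T : porderType d}.

Definition is_aut (s : T -> T) : Prop :=
  bijective s /\ forall x y, (s x <= s y) = (x <= y).

Definition moved (s : T -> T) : T -> Prop := fun a => s a != a.

Definition subX (X : T -> Prop) (A : {fset T}) : Prop :=
  forall a, a \in A -> X a.

Definition nlt (A : {fset T}) : nat :=
  #|` [fset p in A `*` A | p.1 < p.2]|.

Definition max_ordered (X : T -> Prop) (A : {fset T}) : Prop :=
  subX X A /\
  forall B : {fset T}, subX X B -> #|` B| = #|` A| -> nlt B <= nlt A.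

Definition is_chain (C : {fset T}) : Prop :=
  forall a b, a \in C -> b \in C -> (a <= b) || (b <= a).

Definition chain_length (X : T -> Prop) (n : nat) : Prop :=
  (exists C : {fset T}, [/\ subX X C, is_chain C & #|` C| = n]) /\
  (forall C : {fset T}, subX X C -> is_chain C -> #|` C| <= n).

Definition same_length (X Y : T -> Prop) : Prop :=
  exists n, chain_length X n /\ chain_length Y n.

Definition memS (S : {fset T}) : T -> Prop := fun x => x \in S.

Definition iso_to {dq : Order.disp_t} (Q : finPOrderType dq) (S : {fset T}) : Prop :=
  exists f : Q -> T,
    [/\ injective f,
        (forall a, a \in S <-> exists q, f q = a) &
        (forall p q, (f p <= f q) = (p <= q))].

Definition smallest_max_ordered (X : T -> Prop) (S : {fset T}) : Prop :=
  [/\ max_ordered X S, same_length (memS S) X &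
      forall B : {fset T}, max_ordered X B -> same_length (memS B) X ->
        #|` S| <= #|` B|].

Definition generator {dq : Order.disp_t} (Q : finPOrderType dq) (r : nat)
    (s : T -> T) (Ss : nat -> {fset T}) : Prop :=
  [/\ (2 <= r)%N, is_aut s,
      (forall i, (i < r)%N ->
        [/\ subX (moved s) (Ss i), iso_to Q (Ss i),
            smallest_max_ordered (moved s) (Ss i),
            (forall b, b \in Ss ((i + 1) %% r)%N <-> (exists2 a, a \in Ss i & s a = b)) &
            same_length (memS (Ss i)) (moved s)]) &
      (forall a, moved s a <-> (exists2 i, (i < r)%N & a \in Ss i))].

Definition sym1 {dq : Order.disp_t} (Q : finPOrderType dq) (r : nat) (a b : T) : Prop :=
  exists s (Ss : nat -> {fset T}) i j q,
    [/\ generator Q r s Ss, (i < r)%N, (j < r)%N & Ss i != Ss j] /\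
    [/\ a \in Ss i, (1 <= q)%N, (q < r)%N, b = iter q s a & b \in Ss j].

(* (Q,r,n)-symmetry, defined by (fuel-driven) strong recursion on n.
   symAux f n is used only with f > n, where it is the genuine notion. *)
Fixpoint symAux {dq : Order.disp_t} (Q : finPOrderType dq) (r : nat)
    (fuel n : nat) (a b : T) : Prop :=
  match fuel with
  | 0 => False
  | f.+1 =>
    match n with
    | 0 => a = b
    | 1 => sym1 Q r a b
    | _ =>
      (forall j, (j < n)%N -> ~ symAux Q r f j a b) /\
      exists c j, [/\ (1 <= j)%N, (j < n)%N,
                      symAux Q r f j a c & symAux Q r f (n - j) c b]
    end
  end.

Definition sym {dq : Order.disp_t} (Q : finPOrderType dq) (r n : nat) (a b : T) : Prop :=
  symAux Q r n.+1 n a b.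

End PosetSymmetry.

Definition C2 := 'I_2.

(* Main.v *)
Require Import Defs.
From HB Require Import structures.
From mathcomp Require Import all_boot all_order.
From mathcomp Require Import finmap.

Module Helpers.
Set Implicit Arguments.
Unset Strict Implicit.
Unset Printing Implicit Defensive.
Import Order.TTheory.
Local Open Scope order_scope.
Local Open Scope fset_scope.

Section Transport.
Context {d : Order.disp_t} {T : porderType d}.
Variable g : T -> T.
Hypothesis gg : forall x, g (g x) = x.
Hypothesis gle : forall x y, (g x <= g y) = (x <= y).

Lemma g_inj : injective g.
Proof. exact: can_inj gg. Qed.

Lemma glt x y : (g x < g y) = (x < y).
Proof. by rewrite !lt_neqAle gle (inj_eq g_inj). Qed.

Lemma mem_g (A : {fset T}) x : (x \in g @` A) = (g x \in A).
Proof.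
apply/imfsetP/idP => [[y yA ->]|H]; first by rewrite gg.
by exists (g x); rewrite ?gg.
Qed.

Lemma card_g (A : {fset T}) : #|` g @` A| = #|` A|.
Proof. by apply/eqP/card_in_imfsetP => x y _ _; apply: g_inj. Qed.

Lemma gg_set (A : {fset T}) : g @` (g @` A) = A.
Proof. by apply/fsetP => x; rewrite !mem_g gg. Qed.

Lemma chain_g (A : {fset T}) : is_chain A -> is_chain (g @` A).
Proof. by move=> H x y; rewrite !mem_g => /H Hx /Hx; rewrite !gle. Qed.

Lemma nlt_le (A : {fset T}) : (nlt A <= nlt (g @` A))%N.
Proof.
rewrite /nlt.
set pm := fun p : T * T => (g p.1, g p.2).
have pminj : injective pm.
  by move=> [x y] [x' y'] [/g_inj -> /g_inj ->].
set F := [fset p in A `*` A | p.1 < p.2].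
have /card_in_imfsetP/eqP <- : {in F &, injective pm} by move=> p q _ _; apply: pminj.
apply: fsubset_leq_card; apply/fsubsetP => p /imfsetP [q] /=.
rewrite !inE /= => /andP [/andP [q1 q2] qlt] ->.
by rewrite /= !mem_g !gg q1 q2 glt qlt.
Qed.

Lemma nlt_g (A : {fset T}) : nlt (g @` A) = nlt A.
Proof.
apply/eqP; rewrite eqn_leq nlt_le andbT.
by have := nlt_le (g @` A); rewrite gg_set.
Qed.

Variables X Y : T -> Prop.
Hypothesis hY : forall x, Y x <-> X (g x).

Lemma subX_g (A : {fset T}) : subX X A -> subX Y (g @` A).
Proof. by move=> H x; rewrite mem_g => /H; rewrite -hY. Qed.

Lemma subX_g' (A : {fset T}) : subX Y A -> subX X (g @` A).
Proof. by move=> H x; rewrite mem_g => /H; rewrite hY gg. Qed.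

Lemma max_ordered_g S : max_ordered X S -> max_ordered Y (g @` S).
Proof.
move=> [sS HS]; split; first exact: subX_g.
move=> B /subX_g' sB cB.
rewrite nlt_g -(nlt_g B); apply: HS => //.
by rewrite card_g cB card_g.
Qed.

Lemma chain_length_g n : chain_length X n -> chain_length Y n.
Proof.
move=> [[C0 [sC cC nC]] HC]; split.
  by exists (g @` C0); split; [apply: subX_g|apply: chain_g|rewrite card_g].
move=> C /subX_g' sC' /chain_g cC'.
by rewrite -card_g; apply: HC.
Qed.
End Transport.

Section Transport2.
Context {d : Order.disp_t} {T : porderType d}.
Variable g : T -> T.
Hypothesis gg : forall x, g (g x) = x.
Hypothesis gle : forall x y, (g x <= g y) = (x <= y).

Lemma same_length_g (X Y : T -> Prop) (hY : forall x, Y x <-> X (g x)) S :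
  same_length (memS S) X -> same_length (memS (g @` S)) Y.
Proof.
move=> [n [h1 h2]]; exists n; split; last exact: (chain_length_g gg gle hY).
apply: (chain_length_g gg gle (X := memS S)) => // x.
by rewrite /memS (mem_g gg).
Qed.

Lemma smallest_g (X Y : T -> Prop) (hY : forall x, Y x <-> X (g x)) S :
  smallest_max_ordered X S -> smallest_max_ordered Y (g @` S).
Proof.
have hX : forall x, X x <-> Y (g x) by move=> x; rewrite hY gg.
move=> [m sl H]; split.
- exact: (max_ordered_g gg gle hY).
- exact: (same_length_g hY).
- move=> B mB sB; rewrite (card_g gg) -(card_g gg B).
  apply: H; first exact: (max_ordered_g gg gle hX).
  exact: (same_length_g hX).
Qed.

Lemma iso_g {dq : Order.disp_t} (Q : finPOrderType dq) S :
  iso_to Q S -> iso_to Q (g @` S).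
Proof.
move=> [f [fi fm fo]]; exists (g \o f); split.
- by move=> p q /= /(g_inj gg) /fi.
- move=> a; rewrite (mem_g gg) fm; split=> [[q fq]|[q fq]]; exists q => /=.
    by rewrite fq gg.
  by rewrite -fq gg.
- by move=> p q /=; rewrite gle fo.
Qed.

Lemma moved_g (s : T -> T) x : moved (g \o s \o g) x <-> moved s (g x).
Proof.
rewrite /moved /=.
have -> : (g (s (g x)) == x) = (s (g x) == g x); last by [].
apply/eqP/eqP => [E|E]; first by rewrite -{2}E gg.
by rewrite E gg.
Qed.

Lemma is_aut_g (s : T -> T) : is_aut s -> is_aut (g \o s \o g).
Proof.
move=> [sb so]; split.
  apply: bij_comp; last by exists g.
  by apply: bij_comp => //; exists g.
by move=> x y /=; rewrite gle so gle.
Qed.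

Lemma generator_g {dq : Order.disp_t} (Q : finPOrderType dq) r s Ss :
  generator Q r s Ss -> generator Q r (g \o s \o g) (fun i => g @` Ss i).
Proof.
have hY : forall x, moved (g \o s \o g) x <-> moved s (g x) by move=> x; apply: moved_g.
move=> [r2 sa Hi Hc]; split => //.
- exact: is_aut_g.
- move=> i ir; have [h1 h2 h3 h4 h5] := Hi i ir; split.
  + exact: (subX_g gg hY).
  + exact: iso_g.
  + exact: (smallest_g hY).
  + move=> b; rewrite (mem_g gg) h4; split.
      move=> [a0 a0S sa0]; exists (g a0); rewrite /= ?(mem_g gg) ?gg //.
      by rewrite sa0 gg.
    move=> [a0 aS <-]; exists (g a0); rewrite -?(mem_g gg) //= gg.
  + exact: (same_length_g hY).
- move=> a; rewrite hY Hc; split=> [[i ir ai]|[i ir ai]]; exists i => //.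
    by rewrite (mem_g gg).
  by rewrite -(mem_g gg).
Qed.
End Transport2.

Section C2facts.
Context {d : Order.disp_t} {T : porderType d}.
Implicit Types (s : T -> T) (Ss : nat -> {fset T}).

Lemma not_moved s x : ~ moved s x -> s x = x.
Proof. by move=> H; apply/eqP; apply/negPn/negP. Qed.

Lemma aut_lt s x y : is_aut s -> x < y -> s x < s y.
Proof. by move=> [sb so]; rewrite !lt_neqAle (inj_eq (bij_inj sb)) so. Qed.

Lemma two_set S : iso_to (C2 : finPOrderType ord_display) S ->
  exists u v : T, u < v /\ forall x, x \in S <-> x = u \/ x = v.
Proof.
move=> [f [fi fm fo]]; exists (f ord0), (f ord_max); split.
  by rewrite lt_neqAle (inj_eq fi) fo.
move=> x; rewrite fm; split.
  move=> [q <-]; case: q => [[|[|k]] Hk] //.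
    by left; congr f; apply/val_inj.
  by right; congr f; apply/val_inj.
by case=> ->; eexists.
Qed.

Lemma fix2 (h : T -> T) u v : (forall x y, x < y -> h x < h y) -> u < v ->
  (h u = u \/ h u = v) -> (h v = u \/ h v = v) -> h u = u /\ h v = v.
Proof.
move=> hm uv hu hv; have := hm _ _ uv.
case: hu => -> ; case: hv => -> //; rewrite ?ltxx //.
by move=> vu; have := lt_trans uv vu; rewrite ltxx.
Qed.

Variables (s : T -> T) (Ss : nat -> {fset T}).
Hypothesis G : generator (C2 : finPOrderType ord_display) 2 s Ss.

Lemma g_aut : is_aut s. Proof. by case: G. Qed.

Lemma g_moved x : moved s x <-> x \in Ss 0 \/ x \in Ss 1.
Proof.
case: G => _ _ _ ->; split.
  by case=> [[|[|i]]] // _ H; [left|right].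
by case=> H; [exists 0|exists 1].
Qed.

Lemma g_next i a : (i < 2)%N -> a \in Ss i -> s a \in Ss ((i + 1) %% 2).
Proof.
move=> ir aS; case: G => _ _ Hi _; have [_ _ _ h4 _] := Hi i ir.
by apply/h4; exists a.
Qed.

Lemma g_prev i y : (i < 2)%N -> y \in Ss ((i + 1) %% 2) -> exists2 a, a \in Ss i & s a = y.
Proof.
move=> ir yS; case: G => _ _ Hi _; have [_ _ _ h4 _] := Hi i ir.
by apply/h4.
Qed.

Lemma g_two i : (i < 2)%N -> exists u v : T, u < v /\ forall x, x \in Ss i <-> x = u \/ x = v.
Proof.
move=> ir; case: G => _ _ Hi _; have [_ h2 _ _ _] := Hi i ir.
exact: two_set.
Qed.

Lemma g_ss_in i a : (i < 2)%N -> a \in Ss i -> s (s a) \in Ss i.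
Proof.
case: i => [|[|]] // _ aS.
  by have := g_next (isT : (1 < 2)%N) (g_next (isT : (0 < 2)%N) aS).
by have := g_next (isT : (0 < 2)%N) (g_next (isT : (1 < 2)%N) aS).
Qed.

Lemma g_invol x : s (s x) = x.
Proof.
have [H|H] := boolP (s x != x); last first.
  by move/negPn/eqP: H => H; rewrite H H.
have [xS|xS] : x \in Ss 0 \/ x \in Ss 1 by apply/g_moved.
- have [u [v [uv Hm]]] := g_two (isT : (0 < 2)%N).
  have hm : forall x y, x < y -> s (s x) < s (s y).
    by move=> ? ? ?; do 2 apply: aut_lt g_aut _.
  have [hu hv] := fix2 hm uv (proj1 (Hm _) (g_ss_in (isT : (0 < 2)%N) (proj2 (Hm u) (or_introl erefl))))
      (proj1 (Hm _) (g_ss_in (isT : (0 < 2)%N) (proj2 (Hm v) (or_intror erefl)))).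
  by case: (proj1 (Hm x) xS) => ->.
- have [u [v [uv Hm]]] := g_two (isT : (1 < 2)%N).
  have hm : forall x y, x < y -> s (s x) < s (s y).
    by move=> ? ? ?; do 2 apply: aut_lt g_aut _.
  have [hu hv] := fix2 hm uv (proj1 (Hm _) (g_ss_in (isT : (1 < 2)%N) (proj2 (Hm u) (or_introl erefl))))
      (proj1 (Hm _) (g_ss_in (isT : (1 < 2)%N) (proj2 (Hm v) (or_intror erefl)))).
  by case: (proj1 (Hm x) xS) => ->.
Qed.

Lemma g_swap x : moved s x -> ~~ (x <= s x) && ~~ (s x <= x).
Proof.
move=> mx; have [_ so] := g_aut.
apply/andP; split; apply/negP => H.
- have : s x <= s (s x) by rewrite so.
  rewrite g_invol => H'; move/eqP: mx; apply; apply: le_anti; by rewrite H H'.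
- have : s (s x) <= s x by rewrite so.
  rewrite g_invol => H'; move/eqP: mx; apply; apply: le_anti; by rewrite H H'.
Qed.
End C2facts.

Section C2facts2.
Context {d : Order.disp_t} {T : porderType d}.
Variables (s : T -> T) (Ss : nat -> {fset T}).
Hypothesis G : generator (C2 : finPOrderType ord_display) 2 s Ss.

Lemma g_other i y : (i < 2)%N -> moved s y -> y \in Ss i \/ y \in Ss ((i + 1) %% 2).
Proof. by case: i => [|[|]] // _ /(g_moved G) /= []; tauto. Qed.

Lemma g_partner x : moved s x -> exists x' : T, [/\ x' != x, moved s x', (x < x') || (x' < x) &
  forall y, moved s y -> [\/ y = x, y = x', y = s x | y = s x']].
Proof.
move=> mx.
have [i ir xS] : exists2 i, (i < 2)%N & x \in Ss i.
  by case: (proj1 (g_moved G x) mx) => H; [exists 0|exists 1].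
have [u [v [uv Hm]]] := g_two G ir.
have key : forall x x' : T, (forall z, z \in Ss i <-> z = x \/ z = x') -> x' != x ->
   (x < x') || (x' < x) ->
   exists x'0 : T, [/\ x'0 != x, moved s x'0, (x < x'0) || (x'0 < x) &
     forall y, moved s y -> [\/ y = x, y = x'0, y = s x | y = s x'0]].
  move=> x0 x1 H01 n01 c01; exists x1; split => //.
    by apply/(g_moved G); case: i ir H01 {xS Hm} => [|[|]] // _ H01; [left|right]; apply/H01; right.
  move=> y my; case: (g_other ir my) => [/H01 [->|->]|]; first by constructor 1.
    by constructor 2.
  move=> /(g_prev G ir) [a /H01 [->|->] <-]; first by constructor 3.
  by constructor 4.
case: (proj1 (Hm x) xS) => ->.
  apply: key => //; first by rewrite eq_sym; apply: contraTneq uv => ->; rewrite ltxx.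
  by rewrite uv.
apply: (key v u); first by move=> z; have := Hm z; tauto.
  by apply: contraTneq uv => ->; rewrite ltxx.
by rewrite uv orbT.
Qed.

Lemma g_no3 x y z : moved s x -> moved s y -> moved s z -> x < y -> y < z -> False.
Proof.
move=> mx my mz xy yz.
case: G => _ _ Hi _; have [_ _ _ _ [n [[[C [sC cC nC]] _] [_ HC]]]] := Hi 0 isT.
have [u [v [uv Hm]]] := g_two G (isT : (0 < 2)%N).
have n2 : (n <= 2)%N.
  rewrite -nC; apply: leq_trans (_ : (#|` [fset u; v]| <= 2)%N).
    apply: fsubset_leq_card; apply/fsubsetP => w /sC /Hm [->|->]; by rewrite !inE eqxx ?orbT.
  by rewrite cardfs2; case: (u != v).
have xz := lt_trans xy yz.
have := HC (x |` [fset y; z]).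
have -> : #|` (x |` [fset y; z])| = 3.
  rewrite cardfsU1 cardfs2 !inE.
  have e1 : (x == y) = false by apply/eqP => E; move: xy; rewrite E ltxx.
  have e2 : (x == z) = false by apply/eqP => E; move: xz; rewrite E ltxx.
  have e3 : (y == z) = false by apply/eqP => E; move: yz; rewrite E ltxx.
  by rewrite e1 e2 e3.
have H3 : (3 <= n)%N -> False by move=> H; have := leq_trans H n2.
move=> H; apply: H3; apply: H.
  by move=> w; rewrite !inE => /or3P [] /eqP ->.
move=> w w'; rewrite !inE => /or3P [] /eqP -> /or3P [] /eqP ->;
  rewrite ?lexx ?(ltW xy) ?(ltW yz) ?(ltW xz) ?orbT //.
Qed.
End C2facts2.

Section Key.
Context {d : Order.disp_t} {T : porderType d}.

Lemma key (a b c : T) :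
  sym1 (C2 : finPOrderType ord_display) 2 a c ->
  sym1 (C2 : finPOrderType ord_display) 2 c b -> a <> b ->
  sym1 (C2 : finPOrderType ord_display) 2 a b.
Proof.
move=> [s1 [Ss [i [j [q [[G ir jr nij] [aS q1 q2 ec cS]]]]]]].
move=> [s2 [Ts [i' [j' [q' [[H i'r j'r nij'] [cT q1' q2' eb bT]]]]]]] nab.
have {q1 q2} eq1 : q = 1 by case: q q1 q2 {ec} => [|[|]].
have {q1' q2'} eq1' : q' = 1 by case: q' q1' q2' {eb} => [|[|]].
subst q q'; rewrite /= in ec eb; subst c b.
have inv1 := g_invol G; have inv2 := g_invol H.
have [sb1 so1] := g_aut G; have [sb2 so2] := g_aut H.
have ma : moved s1 a by case: G => _ _ _ Hc; apply/Hc; exists i.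
have mc : moved s2 (s1 a) by case: H => _ _ _ Hc; apply/Hc; exists i'.
have ltm1 := fun x y => @aut_lt _ _ s1 x y (g_aut G).
have ltm2 := fun x y => @aut_lt _ _ s2 x y (g_aut H).
have ltr1 : forall x y, s1 x < s1 y -> x < y.
  by move=> x y /ltm1; rewrite !inv1.
have ltr2 : forall x y, s2 x < s2 y -> x < y.
  by move=> x y /ltm2; rewrite !inv2.
have [/negP na1 /negP na2] := andP (g_swap G ma).
have Hb : s1 (s2 (s1 a)) = s2 (s1 a).
  apply: not_moved => mb.
  have [a' [na'a ma' ca Hs1]] := g_partner G ma.
  case: (Hs1 _ mb) => [eb|eb|eb|eb]; last 1 first.
  - have [/negP n1 /negP n2] := andP (g_swap H mc).
    by case/orP: ca => /ltm1/ltW; rewrite -eb => ?; [apply: n1|apply: n2].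
  - by apply: nab; rewrite eb.
  2: by move/negP: mc; apply; apply/eqP.
  (* eb : s2 (s1 a) = a' *)
  have ta' : s2 a' = s1 a by rewrite -eb inv2.
  have ma'2 : moved s2 a'.
    by rewrite -eb; apply/eqP; rewrite inv2; apply/eqP; rewrite eq_sym.
  have [x [nxc mx cx Hs2]] := g_partner H mc.
  have [mta|nmta] := boolP (s2 a != a); last first.
    move/negPn/eqP: nmta => ta.
    case/orP: ca => [/ltm2|/ltm2]; rewrite ta ta'.
      by move/ltW.
    by move/ltW.
  case: (Hs2 _ mta) => ea.
  - by move/eqP: ma; apply; rewrite -ea.
  - by move: cx; rewrite -ea => /orP [/ltW|/ltW].
  - by move/eqP: na'a; apply; rewrite -eb -ea.
  have tx : s2 a = x by rewrite ea inv2.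
  have sx : ((x < s1 a) && (a < a')) || ((s1 a < x) && (a' < a)) -> s1 x = x.
    move=> xc; apply: not_moved => mx1.
    case: (Hs1 _ mx1) => ex.
    + by move/negP: mta; apply; apply/eqP; rewrite tx ex.
    + by move/negP: ma; apply; apply/eqP; rewrite -ta' -ex -ea.
    + by move: xc; rewrite ex ltxx.
    + move: xc; rewrite ex => /orP [/andP [/ltr1 h1 h2]|/andP [/ltr1 h1 h2]].
        by have := lt_trans h1 h2; rewrite ltxx.
      by have := lt_trans h1 h2; rewrite ltxx.
  case/orP: ca => [aa'|a'a].
  - have xc : x < s1 a by rewrite -tx -ta'; apply: ltm2.
    have sxx := sx (introT orP (or_introl (introT andP (conj xc aa')))).
    have xa : x < a by rewrite -sxx -(inv1 a); apply: ltm1.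
    exact: (g_no3 H mx mta ma'2 xa aa').
  - have xc : s1 a < x by rewrite -tx -ta'; apply: ltm2.
    have sxx := sx (introT orP (or_intror (introT andP (conj xc a'a)))).
    have xa : a < x by rewrite -sxx -(inv1 a); apply: ltm1.
    exact: (g_no3 H ma'2 mta mx a'a xa).
exists (s1 \o s2 \o s1), (fun k => s1 @` Ts k), i', j', 1; split; split => //.
- exact: (generator_g inv1 so1 H).
- apply: contra nij' => /eqP E; apply/eqP.
  by rewrite -(gg_set inv1 (Ts i')) E gg_set.
- by rewrite (mem_g inv1).
- by rewrite (mem_g inv1) Hb.
Qed.
End Key.

Lemma aux {d : Order.disp_t} {T : porderType d} f : forall n (a b : T),
  symAux (C2 : finPOrderType ord_display) 2 f n a b -> (n <= 1)%N.
Proof.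
elim: f => [|f IH] n a b //=.
case: n => [|[|n]] // [Hn [c [j [j1 jn Hac Hcb]]]].
have := IH _ _ _ Hac; have := IH _ _ _ Hcb.
case: j j1 jn Hac Hcb => [|[|j]] // _ _ Hac Hcb.
case: n Hn Hcb => [|n] // Hn Hcb _ _.
case: f IH Hn Hac Hcb => [|f] IH Hn //= Hac Hcb.
exfalso; apply: (Hn 1 isT); apply: key Hac Hcb _.
by move=> E; apply: (Hn 0 isT).
Qed.
End Helpers.
Import Helpers.

Theorem mainTheorem4 (d : Order.disp_t) (P : porderType d) (k : nat) (a b : P) :
  sym (C2 : finPOrderType _) 2 k a b -> k = 0 \/ k = 1.
Proof.
move=> /aux; case: k => [|[|]] //; by [left|right].
Qed.
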